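(* Let $G$ be a forest. Then the independence complex $\Delta(G)$ is sortable if and only if each connected component (tree) of $G$ is a path graph.
   Context: The independence complex $\Delta(G)$ is the simplicial complex of all independent sets of $G$. For finite $F,G\subset\mathbb{N}$ with $|F|=r,|G|=s$, write $\mathbf{x}^F\mathbf{x}^G=x_{i_1}\cdots x_{i_{r+s}}$ with $i_1\le\cdots\le i_{r+s}$ (where $\mathbf{x}^F=\prod_{i\in F}x_i$) and set $\mathrm{sort}(F,G)=(\{i_k:k\text{ odd}\},\{i_k:k\text{ even}\})$. A simplicial complex $\Delta$ with $V(\Delta)\subset\mathbb{N}$ is sortable with respect to the given labeling if $\mathrm{sort}(F,G)\in\Delta\times\Delta$ for all $F,G\in\Delta$; $\Delta$ is sortable if it is sortable with respect to some labeling of its vertices by distinct integers. *)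

(* Defs.v *)
From mathcomp Require Import all_boot.
Set Implicit Arguments. Unset Strict Implicit. Unset Printing Implicit Defensive.

(* A simple graph is a symmetric irreflexive relation e on a finite vertex type T. *)

(* Independent sets of G: the faces of the independence complex Delta(G). *)
Definition indep (T : finType) (e : rel T) (F : {set T}) : bool :=
  [forall x in F, forall y in F, ~~ e x y].

Definition forest (T : finType) (e : rel T) : Prop :=
  forall c : seq T, 3 <= size c -> ~~ ucycleb e c.

Definition component (T : finType) (e : rel T) (x : T) : {set T} :=
  [set y | connect e x y].

Definition is_path_graph (T : finType) (e : rel T) (C : {set T}) : Prop :=
  exists p : seq T,
    [/\ uniq p, (forall x, (x \in C) = (x \in p)) &
        forall x y, x \in C -> y \in C ->
          (e x y <-> exists2 i, i.+1 < size p &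
             ((nth x p i == x) && (nth x p i.+1 == y)) ||
             ((nth x p i == y) && (nth x p i.+1 == x)))].

(* Labels of the vertices of F, sorted with multiplicity after merging two sets:
   x^F x^G = x_{i_1} ... x_{i_{r+s}} with i_1 <= ... <= i_{r+s}. *)
Definition merged_labels (T : finType) (lab : T -> nat) (F G : {set T}) : seq nat :=
  sort leq ([seq lab x | x in F] ++ [seq lab x | x in G]).

(* {i_k : k odd} and {i_k : k even} (1-indexed positions k). *)
Definition odd_pos (s : seq nat) : seq nat :=
  [seq nth 0 s k | k <- iota 0 (size s) & ~~ odd k].
Definition even_pos (s : seq nat) : seq nat :=
  [seq nth 0 s k | k <- iota 0 (size s) & odd k].

(* sort(F,G), transported back to vertex sets through the (injective) labeling. *)
Definition sort1 (T : finType) (lab : T -> nat) (F G : {set T}) : {set T} :=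
  [set x | lab x \in odd_pos (merged_labels lab F G)].
Definition sort2 (T : finType) (lab : T -> nat) (F G : {set T}) : {set T} :=
  [set x | lab x \in even_pos (merged_labels lab F G)].

Definition sortable_wrt (T : finType) (e : rel T) (lab : T -> nat) : Prop :=
  forall F G : {set T}, indep e F -> indep e G ->
    indep e (sort1 lab F G) /\ indep e (sort2 lab F G).

Definition ind_complex_sortable (T : finType) (e : rel T) : Prop :=
  exists lab : T -> nat, injective lab /\ sortable_wrt e lab.

(* Main.v *)
Require Import Defs.
From mathcomp Require Import all_boot.
From mathcomp Require Import zify.
From Stdlib Require Import ClassicalEpsilon.
Set Implicit Arguments. Unset Strict Implicit. Unset Printing Implicit Defensive.

Lemma count_two (s : seq nat) k m a :
  k < m -> m < size s -> nth 0 s k = a -> nth 0 s m = a -> 1 < count_mem a s.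
Proof.
move=> km ms hk hm.
rewrite -(cat_take_drop m s) count_cat (drop_nth 0 ms) /= hm eqxx.
have : a \in take m s.
  rewrite -hk -(nth_take 0 km); apply: mem_nth; rewrite size_take ms //.
rewrite -has_pred1 has_count => H. rewrite -[true + _]/(1 + _) addnCA add1n ltnS; exact: leq_trans H (leq_addr _ _).
Qed.

Lemma sorted_adj (s : seq nat) k k' a :
  sorted leq s -> k < size s -> k' < size s ->
  nth 0 s k = a -> nth 0 s k' = a.+1 ->
  count_mem a s <= 1 -> count_mem a.+1 s <= 1 -> k' = k.+1.
Proof.
move=> ss ks k's hk hk' ca ca1.
have mono := sorted_leq_nth leq_trans leqnn 0 ss.
have kk' : k < k'.
  rewrite ltnNge; apply/negP => le.
  have := mono k' k k's ks le. rewrite hk hk'. lia.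
have [->|lt] := eqVneq k' k.+1 => //.
have m1 : k.+1 < k' by lia.
have ms : k.+1 < size s by lia.
have h1 := mono k k.+1 ks ms (leqnSn k).
have h2 := mono k.+1 k' ms k's (ltnW m1).
rewrite hk in h1; rewrite hk' in h2.
have [e1|e2] : nth 0 s k.+1 = a \/ nth 0 s k.+1 = a.+1 by lia.
- have := count_two (ltnSn k) ms hk e1. lia.
- have := count_two m1 k's e2 hk'. lia.
Qed.

Section Sortable.
Variables (T : finType) (e : rel T) (lab : T -> nat).
Hypothesis labI : injective lab.

Lemma indepP (F : {set T}) x y : indep e F -> x \in F -> y \in F -> ~~ e x y.
Proof. by move=> /forall_inP H xF yF; move/forall_inP: (H x xF) => /(_ y yF). Qed.

Lemma mem_merged F G x :
  (lab x \in merged_labels lab F G) = (x \in F) || (x \in G).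
Proof.
by rewrite /merged_labels mem_sort mem_cat !(mem_map labI) !mem_enum.
Qed.

Lemma count_merged F G x :
  count_mem (lab x) (merged_labels lab F G) = (x \in F) + (x \in G).
Proof.
rewrite /merged_labels count_sort count_cat !count_map.
have E : forall (A : {set T}), count (preim lab (pred1 (lab x))) (enum A) = (x \in A).
  move=> A; rewrite (eq_count (a2 := pred1 x)); last by move=> z /=; rewrite (inj_eq labI).
  by rewrite count_uniq_mem ?enum_uniq // mem_enum.
by rewrite !E.
Qed.

Lemma odd_posP s a : a \in odd_pos s ->
  exists2 k, k < size s & ~~ odd k /\ nth 0 s k = a.
Proof.
by case/mapP => k; rewrite mem_filter mem_iota add0n => /andP[ok /andP[_ ks]] ->; exists k.
Qed.

Lemma even_posP s a : a \in even_pos s ->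
  exists2 k, k < size s & odd k /\ nth 0 s k = a.
Proof.
by case/mapP => k; rewrite mem_filter mem_iota add0n => /andP[ok /andP[_ ks]] ->; exists k.
Qed.

Lemma core F G x y k k' : indep e F -> indep e G -> e x y -> lab y = (lab x).+1 ->
  let s := merged_labels lab F G in
  k < size s -> k' < size s -> nth 0 s k = lab x -> nth 0 s k' = lab y ->
  odd k = odd k' -> False.
Proof.
move=> iF iG exy lxy s ks k's hk hk' par.
have xs : lab x \in s by rewrite -hk mem_nth.
have ys : lab y \in s by rewrite -hk' mem_nth.
rewrite /s mem_merged in xs; rewrite /s mem_merged in ys.
have nF : ~~ ((x \in F) && (y \in F)).
  by apply/negP => /andP[a b]; move: (indepP iF a b); rewrite exy.
have nG : ~~ ((x \in G) && (y \in G)).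
  by apply/negP => /andP[a b]; move: (indepP iG a b); rewrite exy.
have c1 : count_mem (lab x) s <= 1.
  rewrite /s count_merged; move: xs ys nF nG.
  by case: (x \in F); case: (x \in G); case: (y \in F); case: (y \in G).
have c2 : count_mem (lab x).+1 s <= 1.
  rewrite -lxy /s count_merged; move: xs ys nF nG.
  by case: (x \in F); case: (x \in G); case: (y \in F); case: (y \in G).
have ss : sorted leq s by apply: sort_sorted; exact: leq_total.
rewrite lxy in hk'.
have := sorted_adj ss ks k's hk hk' c1 c2 => E.
by move: par; rewrite E /=; case: (odd k).
Qed.

Lemma sortable_of_adj :
  (forall x y, e x y -> lab y = (lab x).+1 \/ lab x = (lab y).+1) ->
  (forall x y, e x y -> e y x) ->
  sortable_wrt e lab.
Proof.
move=> adj esym F G iF iG.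
have gen : forall x y, e x y -> lab y = (lab x).+1 ->
   ~~ ((x \in sort1 lab F G) && (y \in sort1 lab F G)) /\
   ~~ ((x \in sort2 lab F G) && (y \in sort2 lab F G)).
  move=> x y exy lxy; split; apply/negP; rewrite !inE => /andP[].
  - move=> /odd_posP[k ks [ok hk]] /odd_posP[k' k's [ok' hk']].
    apply: (core iF iG exy lxy ks k's hk hk'); move: ok ok'.
    by case: (odd k); case: (odd k').
  - move=> /even_posP[k ks [ok hk]] /even_posP[k' k's [ok' hk']].
    apply: (core iF iG exy lxy ks k's hk hk'); move: ok ok'.
    by case: (odd k); case: (odd k').
split; apply/forall_inP => x xS; apply/forall_inP => y yS; apply/negP => exy.
- case: (adj x y exy) => l.
  + by case: (gen x y exy l) => [/negP H _]; apply: H; rewrite xS yS.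
  + by case: (gen y x (esym _ _ exy) l) => [/negP H _]; apply: H; rewrite xS yS.
- case: (adj x y exy) => l.
  + by case: (gen x y exy l) => [_ /negP H]; apply: H; rewrite xS yS.
  + by case: (gen y x (esym _ _ exy) l) => [_ /negP H]; apply: H; rewrite xS yS.
Qed.
End Sortable.


Section Easy.
Variables (T : finType) (e : rel T).
Hypothesis esym : symmetric e.

Definition ppred (C : {set T}) (p : seq T) : Prop :=
    [/\ uniq p, (forall x, (x \in C) = (x \in p)) &
        forall x y, x \in C -> y \in C ->
          (e x y <-> exists2 i, i.+1 < size p &
             ((nth x p i == x) && (nth x p i.+1 == y)) ||
             ((nth x p i == y) && (nth x p i.+1 == x)))].

Definition pp (C : {set T}) : seq T := epsilon (inhabits [::]) (ppred C).

Hypothesis H : forall x : T, is_path_graph e (component e x).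

Lemma ppP x : ppred (component e x) (pp (component e x)).
Proof. exact: (epsilon_spec (inhabits [::]) (ppred (component e x)) (H x)). Qed.

Definition labf (x : T) : nat :=
  enum_rank (component e x) * #|T|.+1 + index x (pp (component e x)).

Lemma comp_in x : x \in pp (component e x).
Proof. by case: (ppP x) => _ <- _; rewrite inE connect0. Qed.

Lemma idx_lt x : index x (pp (component e x)) < #|T|.+1.
Proof.
case: (ppP x) => u _ _.
rewrite ltnS; apply: leq_trans (max_card (mem (pp (component e x)))).
by rewrite (card_uniqP u) index_size.
Qed.

Lemma labf_inj : injective labf.
Proof.
move=> x y; rewrite /labf => E.
have hx := idx_lt x; have hy := idx_lt y.
set n1 := nat_of_ord (enum_rank (component e x)) in E.
set n2 := nat_of_ord (enum_rank (component e y)) in E.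
set i1 := index x _ in E hx; set i2 := index y _ in E hy.
have en : n1 = n2 by nia.
have ei : i1 = i2 by nia.
have ec : component e x = component e y by apply: enum_rank_inj; apply: val_inj.
rewrite /i1 /i2 ec in ei.
rewrite -(nth_index x (comp_in x)) ec ei nth_index // -ec.
by rewrite ec comp_in.
Qed.

Lemma labf_adj x y : e x y -> labf y = (labf x).+1 \/ labf x = (labf y).+1.
Proof.
move=> exy.
have ec : component e x = component e y.
  by apply/setP => z; rewrite !inE (same_connect1 (sym_connect_sym esym) exy).
have yC : y \in component e x by rewrite inE connect1.
have xC : x \in component e x by rewrite inE connect0.
case: (ppP x) => u _ P.
case: ((P x y xC yC).1 exy) => i ip /orP[] /andP[/eqP h1 /eqP h2].
- have i1 : index x (pp (component e x)) = i by rewrite -{1}h1 index_uniq // ltnW.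
  have i2 : index y (pp (component e x)) = i.+1 by rewrite -{1}h2 index_uniq.
  by left; rewrite /labf -ec i1 i2 addnS.
- have i1 : index y (pp (component e x)) = i by rewrite -{1}h1 index_uniq // ltnW.
  have i2 : index x (pp (component e x)) = i.+1 by rewrite -{1}h2 index_uniq.
  by right; rewrite /labf -ec i1 i2 addnS.
Qed.

Lemma easy_dir : ind_complex_sortable e.
Proof.
exists labf; split; first exact: labf_inj.
apply: sortable_of_adj; first exact: labf_inj.
- exact: labf_adj.
- by move=> x y; rewrite esym.
Qed.
End Easy.

Section Deg.
Variables (T : finType) (e : rel T).
Hypotheses (esym : symmetric e) (eirr : irreflexive e).

Lemma deg3 (lab : T -> nat) : injective lab -> sortable_wrt e lab ->
  forall v a b c, e v a -> e v b -> e v c -> a != b -> a != c -> b != c ->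
  ~~ e a b -> ~~ e a c -> ~~ e b c -> False.
Proof.
move=> labI srt v a b c va vb vc ab ac bc nab nac nbc.
have ne : forall x y, e x y -> x != y.
  by move=> x y exy; apply/eqP => E; move: exy; rewrite E eirr.
set F := [set v]; set G := [set a; b; c].
have iF : indep e F.
  by apply/forall_inP => x; rewrite inE => /eqP->; apply/forall_inP => y; rewrite inE => /eqP->; rewrite eirr.
have iG : indep e G.
  apply/forall_inP => x; rewrite !inE => hx; apply/forall_inP => y; rewrite !inE => hy.
  case/orP: hx => [/orP[]|] /eqP->; case/orP: hy => [/orP[]|] /eqP->; rewrite ?eirr // esym //.
have vG : v \notin G.
  by rewrite !inE !negb_or (ne _ _ va) (ne _ _ vb) (ne _ _ vc).
set s := merged_labels lab F G.
have us : uniq s.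
  rewrite /s /merged_labels sort_uniq cat_uniq !(map_inj_uniq labI) !enum_uniq /= andbT.
  apply/hasPn => t /mapP[y]; rewrite mem_enum => yG ->.
  apply/mapP => [[z]]; rewrite mem_enum inE => /eqP -> /labI E.
  by move: vG; rewrite -E yG.
have szs : size s = 4.
  rewrite /s /merged_labels size_sort size_cat !size_map -!cardE cards1.
  rewrite /G -setUA !cardsU1 cards1 !inE negb_or ab ac bc.
  done.
have key : forall t, t \in s -> t != lab v -> exists2 y, lab y = t & e v y.
  move=> t; rewrite /s /merged_labels mem_sort mem_cat => /orP[] /mapP[y];
    rewrite mem_enum => yS -> hne.
  - by move: yS hne; rewrite inE => /eqP ->; rewrite eqxx.
  - exists y => //; move: yS; rewrite !inE => /orP[/orP[]|] /eqP -> //.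
case: (srt F G iF iG) => i1 i2.
have vs : lab v \in s by rewrite mem_merged // inE eqxx.
move: us vs key i1 i2; rewrite /sort1 /sort2 -/s.
case: s szs => [|s0 [|s1 [|s2 [|s3 []]]]] // _.
rewrite /odd_pos /even_pos /= => us vs key i1 i2.
move: us; rewrite !inE !negb_or => /and4P[/and3P[n01 n02 n03] /andP[n12 n13] n23 _].
have K : forall (Z : {set T}) t, indep e Z -> v \in Z -> t \in [:: s0; s1; s2; s3] ->
    t != lab v -> (forall y, lab y = t -> y \in Z) -> False.
  move=> Z t iZ vZ ts tn hZ; case: (key t ts tn) => y ly vy.
  by move: (indepP iZ vZ (hZ y ly)); rewrite vy.
move: vs; rewrite !inE => /orP[/eqP E|/orP[/eqP E|/orP[/eqP E|/eqP E]]].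
- apply: (K _ s2 i1); rewrite ?inE ?E ?eqxx ?orbT //; first by rewrite eq_sym.
  by move=> y ly; rewrite inE ly !inE eqxx orbT.
- apply: (K _ s3 i2); rewrite ?inE ?E ?eqxx ?orbT //; first by rewrite eq_sym.
  by move=> y ly; rewrite inE ly !inE eqxx orbT.
- apply: (K _ s0 i1); rewrite ?inE ?E ?eqxx ?orbT //.
  by move=> y ly; rewrite inE ly !inE eqxx.
- apply: (K _ s1 i2); rewrite ?inE ?E ?eqxx ?orbT //.
  by move=> y ly; rewrite inE ly !inE eqxx.
Qed.
End Deg.

Section Hard.
Variables (T : finType) (e : rel T).
Hypotheses (esym : symmetric e) (eirr : irreflexive e) (hforest : forest e).

Lemma sorted_cat2 (s s' : seq T) : sorted e (s ++ s') -> sorted e s /\ sorted e s'.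
Proof.
case: s => //= x s0; rewrite cat_path => /andP[-> H]; split => //.
exact: path_sorted H.
Qed.

Lemma sorted_drop n (s : seq T) : sorted e s -> sorted e (drop n s).
Proof. by rewrite -[s in sorted _ s](cat_take_drop n) => /sorted_cat2[]. Qed.

Lemma nocycle a m : path e a m -> e (last a m) a -> uniq (a :: m) -> 2 <= size m -> False.
Proof.
move=> pm la u sm.
have := hforest (c := a :: m) sm.
by move: u; rewrite /ucycleb /= rcons_path pm la => ->.
Qed.

Lemma triangle u v w : e u v -> e v w -> e w u -> False.
Proof.
move=> uv vw wu.
have ne : forall x y, e x y -> x != y.
  by move=> x y exy; apply/eqP => E; move: exy; rewrite E eirr.
apply: (nocycle (a := u) (m := [:: v; w])) => //=.
- by rewrite uv vw.
- rewrite !inE negb_or (ne _ _ uv) andTb andbT.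
  by rewrite eq_sym (ne _ _ wu) (ne _ _ vw).
Qed.

Lemma chord (p : seq T) d i j : sorted e p -> uniq p -> i < j -> j < size p ->
  e (nth d p j) (nth d p i) -> j = i.+1.
Proof.
move=> sp up ij jp ji.
case: (eqVneq j i.+1) => // /eqP nj; exfalso.
have ip : i < size p by lia.
have dn : drop i p = nth d p i :: drop i.+1 p by rewrite (drop_nth d ip).
have sd : path e (nth d p i) (drop i.+1 p).
  by have := sorted_drop i sp; rewrite dn.
set m := take (j - i) (drop i.+1 p).
have szm : size m = j - i by rewrite size_takel // size_drop; lia.
have ec : nth d p i :: m = take (j - i).+1 (drop i p) by rewrite dn.
apply: (nocycle (a := nth d p i) (m := m)).
- exact: take_path.
- rewrite (last_nth (nth d p i)) ec szm nth_take // nth_drop.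
  rewrite (set_nth_default d); last by lia.
  by rewrite subnKC //; exact: ltnW.
- by rewrite ec take_uniq // drop_uniq.
- rewrite szm; lia.
Qed.

Lemma exit (S : pred T) u v : connect e u v -> S u -> ~~ S v ->
  exists x y, [/\ S x, ~~ S y & e x y].
Proof.
case/connectP => q; elim: q u => [|z q IH] u /=.
  by move=> _ -> Sv /negP.
case/andP => uz pq lv Su nSv.
case Sz: (S z); first exact: (IH z pq lv Sz nSv).
by exists u, z; rewrite Su Sz uz.
Qed.

Lemma adj_nth a s d i : path e a s -> i.+1 < size (a :: s) ->
  e (nth d (a :: s) i) (nth d (a :: s) i.+1).
Proof.
move=> /pathP H hi.
have := H a i hi.
rewrite (set_nth_default d a); last by rewrite /= ltnW.
by rewrite (set_nth_default d a (s := s)).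
Qed.

Lemma size_uniq_le (s : seq T) : uniq s -> size s <= #|T|.
Proof. by move=> u; rewrite -(card_uniqP u) max_card. Qed.

Variable x0 : T.
Definition good a s := [&& path e a s, uniq (a :: s) & all (connect e x0) (a :: s)].

Lemma maxpath n a s : #|T| - size s <= n -> good a s ->
  exists a' s', [/\ good a' s', (forall w, e a' w -> w \in a' :: s') &
                    (forall w, e (last a' s') w -> w \in a' :: s')].
Proof.
elim: n a s => [|n IH] a s hn g; case/and3P: (g) => ps us cs;
  have sz := size_uniq_le us; rewrite /= in sz.
  by move: hn; rewrite leqn0 subn_eq0 leqNgt sz.
case: (pickP (fun w => e a w && (w \notin a :: s))) => [w /andP[aw wn]|n1].
  apply: (IH w (a :: s)); first (rewrite /=; set Q := #|T| in hn sz *; lia).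
  apply/and3P; split.
  - by rewrite /= esym aw ps.
  - by rewrite cons_uniq wn us.
  - apply/andP; split; last exact: cs.
    exact: connect_trans (allP cs a (mem_head _ _)) (connect1 aw).
case: (pickP (fun w => e (last a s) w && (w \notin a :: s))) => [w /andP[aw wn]|n2].
  apply: (IH a (rcons s w)).
    rewrite size_rcons; set Q := #|T| in hn sz *; lia.
  apply/and3P; split.
  - by rewrite rcons_path ps aw.
  - by rewrite -rcons_cons rcons_uniq wn us.
  - rewrite -rcons_cons all_rcons cs andbT.
    exact: connect_trans (allP cs _ (mem_last _ _)) (connect1 aw).
exists a, s; split => // w aw; apply/negPn/negP => wn.
  by move: (n1 w); rewrite aw wn.
by move: (n2 w); rewrite aw wn.
Qed.

Lemma hard_comp (lab : T -> nat) : injective lab -> sortable_wrt e lab ->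
  is_path_graph e (component e x0).
Proof.
move=> labI srt.
have g0 : good x0 [::] by rewrite /good /= connect0.
have [a [s [g mh ml]]] := maxpath (leqnn (#|T| - size [::])) g0.
case/and3P: g => ps us cs.
have sp : sorted e (a :: s) by [].
have csym := sym_connect_sym esym.
have inP : forall x, (x \in component e x0) = (x \in a :: s).
  move=> x; apply/idP/idP; last by move=> xp; rewrite inE (allP cs x xp).
  rewrite inE => cx; apply/negPn/negP => xn.
  have ca : connect e a x.
    by apply: connect_trans cx; rewrite csym (allP cs a (mem_head _ _)).
  have [u [w [up wn uw]]] := exit (S := mem (a :: s)) ca (mem_head _ _) xn.
  set p := a :: s in up wn us sp.
  have kp : index u p < size p by rewrite index_mem.
  have hu : nth a p (index u p) = u by rewrite nth_index.
  case: (posnP (index u p)) => [k0|kpos].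
    have ua : u = a by rewrite -hu k0.
    by move: (mh w); rewrite -{1}ua uw => /(_ isT) H; move/negP: wn; apply.
  case: (eqVneq (index u p) (size s)) => [kl|knl].
    have ul : u = last a s by rewrite (last_nth a) -/p -kl hu.
    by move: (ml w); rewrite -{1}ul uw => /(_ isT) H; move/negP: wn; apply.
  move: (index u p) kp hu kpos knl => k kp hu kpos knl.
  have kp' : k.+1 < size p by rewrite /= ltnS ltn_neqAle knl -ltnS.
  have km : k.-1 < size p by exact: leq_ltn_trans (leq_pred k) kp.
  have e1 : e (nth a p k.-1) u.
    have := @adj_nth a s a k.-1 ps; rewrite prednK // -/p hu; apply; exact: ltnW.
  have e2 : e u (nth a p k.+1) by have := @adj_nth a s a k ps kp'; rewrite -/p hu.
  have mm : nth a p k.-1 \in p by apply: mem_nth.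
  have mp : nth a p k.+1 \in p by apply: mem_nth.
  have nkk : k.-1 != k.+1 by rewrite neq_ltn (leq_ltn_trans (leq_pred k) (ltnSn k)).
  apply: (deg3 esym eirr labI srt (v := u) (a := nth a p k.-1) (b := nth a p k.+1) (c := w)).
  - by rewrite esym.
  - exact: e2.
  - exact: uw.
  - by rewrite nth_uniq.
  - by apply/eqP => E; move/negP: wn; apply; rewrite -E; exact: mm.
  - by apply/eqP => E; move/negP: wn; apply; rewrite -E; exact: mp.
  - apply/negP => E.
    have lt : k.-1 < k.+1 by exact: (leq_ltn_trans (leq_pred k) (ltnSn k)).
    have := chord (d := a) sp us lt kp'.
    rewrite esym E => /(_ isT) H.
    by move: H; rewrite prednK // => H; apply: (@n_Sn k); rewrite {1}H.
  - apply/negP => E; apply: (triangle e1 uw); by rewrite esym.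
  - apply/negP => E; apply: (triangle e2 E); by rewrite esym.
exists (a :: s); split => //.
move=> x y xC yC; rewrite inP in xC; rewrite inP in yC.
set p := a :: s in xC yC us sp ps *.
have hx : nth x p (index x p) = x by rewrite nth_index.
have hy : nth x p (index y p) = y by rewrite nth_index.
have ix : index x p < size p by rewrite index_mem.
have iy : index y p < size p by rewrite index_mem.
split.
- move=> exy.
  case: (ltngtP (index x p) (index y p)) => [lt|gt|eq].
  + have := chord (d := x) sp us lt iy; rewrite hx hy esym => /(_ exy) E.
    exists (index x p); first by rewrite -E.
    by rewrite -E hx hy !eqxx.
  + have := chord (d := x) sp us gt ix; rewrite hx hy => /(_ exy) E.
    exists (index y p); first by rewrite -E.
    by rewrite -E hx hy !eqxx orbT.
  + by move: exy; rewrite -hx -hy eq eirr.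
- case=> i ip /orP[] /andP[/eqP h1 /eqP h2].
  + by rewrite -h1 -h2; exact: (@adj_nth a s x i ps ip).
  + by rewrite esym; have := @adj_nth a s x i ps ip; rewrite -/p h1 h2.
Qed.

End Hard.

Theorem corollary1p10 (T : finType) (e : rel T)
  (esym : symmetric e) (eirr : irreflexive e) (hforest : forest e) :
  ind_complex_sortable e <-> (forall x : T, is_path_graph e (component e x)).
Proof.
split.
- case=> lab [labI srt] x.
  exact: (hard_comp esym eirr hforest x labI srt).
- move=> H; exact: (easy_dir esym H).
Qed.
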